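(* Let $m$ be a positive integer and suppose there exists an $m\times m$ panstochastic matrix that is not a convex combination of panmagic permutation matrices. Let $n$ be a positive integer with $\gcd(n,6)=1$. Then there exists an $(mn)\times(mn)$ panstochastic matrix that is not a convex combination of panmagic permutation matrices.
   Context: Rows and columns of $n\times n$ matrices are indexed by $\Omega_n=\{0,\dots,n-1\}$. The $k$th upward (resp. downward) diagonal consists of positions $(i,j)$ with $i+j\equiv k$ (resp. $i-j\equiv k$) $\pmod n$. A real $n\times n$ matrix is panstochastic if its entries are nonnegative and its entries along every row, column, upward diagonal and downward diagonal sum to $1$. A panmagic permutation matrix is a permutation matrix $P_\pi$ ($(i,j)$ entry $1$ if $i=\pi(j)$, else $0$) that is panstochastic. A convex combination is a linear combination with nonnegative coefficients summing to $1$. *)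

(* Defs.v *)
From mathcomp Require Import all_boot all_order all_algebra all_fingroup.
Set Implicit Arguments. Unset Strict Implicit. Unset Printing Implicit Defensive.
Import Order.TTheory GRing.Theory Num.Theory.
Local Open Scope ring_scope.

(* Rows/columns indexed by 'I_n = {0,..,n-1}.
   k-th upward diagonal: (i + j) = k mod n; k-th downward: i - j = k mod n,
   written in nat as (i + (n - j)) %% n == k (j < n). *)
Definition panstochastic (R : realFieldType) (n : nat) (A : 'M[R]_n) : Prop :=
  (forall i j, 0 <= A i j) /\
  (forall i : 'I_n, \sum_(j < n) A i j = 1) /\
  (forall j : 'I_n, \sum_(i < n) A i j = 1) /\
  (forall k : 'I_n, \sum_(i < n) \sum_(j < n | ((i + j) %% n == k)%N) A i j = 1) /\
  (forall k : 'I_n, \sum_(i < n) \sum_(j < n | ((i + (n - j)) %% n == k)%N) A i j = 1).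

Definition perm_matrix (R : realFieldType) (n : nat) (pi : {perm 'I_n}) : 'M[R]_n :=
  \matrix_(i < n, j < n) (if i == pi j then 1 else 0).

Definition panmagic_perm (R : realFieldType) (n : nat) (pi : {perm 'I_n}) : Prop :=
  panstochastic (perm_matrix R pi).

Definition convex_comb_panmagic (R : realFieldType) (n : nat) (A : 'M[R]_n) : Prop :=
  exists c : {perm 'I_n} -> R,
    (forall pi, 0 <= c pi) /\
    (forall pi, c pi != 0 -> panmagic_perm R pi) /\
    \sum_(pi : {perm 'I_n}) c pi = 1 /\
    A = \sum_(pi : {perm 'I_n}) c pi *: perm_matrix R pi.

(* Main.v *)
Require Import Defs.
From mathcomp Require Import all_boot all_order all_algebra all_fingroup.
Set Implicit Arguments. Unset Strict Implicit. Unset Printing Implicit Defensive.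
Import Order.TTheory GRing.Theory Num.Theory.
Local Open Scope ring_scope.

Lemma hi_lt m n (i : 'I_(m*n)) : (i %/ n < m)%N.
Proof.
case: n i => [|n] [i Hi] /=; first by rewrite muln0 in Hi.
by rewrite ltn_divLR.
Qed.

Lemma lo_lt m n (i : 'I_(m*n)) : (i %% n < n)%N.
Proof.
case: n i => [|n] [i Hi] /=; first by rewrite muln0 in Hi.
by rewrite ltn_pmod.
Qed.

Definition hi m n (i : 'I_(m*n)) : 'I_m := Ordinal (hi_lt i).
Definition lo m n (i : 'I_(m*n)) : 'I_n := Ordinal (lo_lt i).

Lemma idx_lt m n (a : 'I_m) (s : 'I_n) : (a * n + s < m * n)%N.
Proof.
apply: (@leq_trans (a * n + n)); first by rewrite ltn_add2l.
by rewrite -mulSnr leq_mul2r ltn_ord orbT.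
Qed.

Definition idx m n (a : 'I_m) (s : 'I_n) : 'I_(m*n) := Ordinal (idx_lt a s).

Lemma hi_idx m n (a : 'I_m) (s : 'I_n) : hi (idx a s) = a.
Proof.
apply/val_inj => /=; have n0 : (0 < n)%N by case: s; case: n.
by rewrite divnMDl // divn_small // addn0.
Qed.

Lemma lo_idx m n (a : 'I_m) (s : 'I_n) : lo (idx a s) = s.
Proof.
apply/val_inj => /=; by rewrite modnMDl modn_small.
Qed.

Lemma idx_hilo m n (i : 'I_(m*n)) : idx (hi i) (lo i) = i.
Proof. by apply/val_inj => /=; rewrite -divn_eq. Qed.

Lemma sum_split (R : nmodType) m n (F : 'I_(m*n) -> R) :
  \sum_i F i = \sum_(a < m) \sum_(s < n) F (idx a s).
Proof.
rewrite pair_big /=.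
rewrite (reindex (fun p : 'I_m * 'I_n => idx p.1 p.2)) //=.
exists (fun i => (hi i, lo i)) => [[a s] _ | i _] /=.
  by rewrite hi_idx lo_idx.
by rewrite idx_hilo.
Qed.

Lemma mod_mn m n q r : (0 < m)%N -> (r < n)%N ->
  ((q * n + r) %% (m * n) = (q %% m) * n + r)%N.
Proof.
move=> m0 rn.
rewrite {1}(divn_eq q m) mulnDl -mulnA -addnA modnMDl modn_small //.
apply: (@leq_trans ((q %% m) * n + n)); first by rewrite ltn_add2l.
by rewrite -mulSnr leq_mul2r ltn_pmod // orbT.
Qed.

Lemma decomp_eq n q1 r1 q2 r2 : (r1 < n)%N -> (r2 < n)%N ->
  (q1 * n + r1 == q2 * n + r2)%N = (q1 == q2) && (r1 == r2).
Proof.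
move=> h1 h2; have n0 : (0 < n)%N by apply: leq_ltn_trans h1.
apply/eqP/andP => [E|[/eqP-> /eqP->]] //.
have := congr1 (divn^~ n) E; have := congr1 (modn^~ n) E.
by rewrite /= !modnMDl !modn_small // !divnMDl // !divn_small // !addn0 => -> ->.
Qed.

Lemma down_eq N (i j k : nat) : (i < N)%N -> (j < N)%N -> (k < N)%N ->
  ((i + (N - j)) %% N == k)%N = (i == (k + j) %% N)%N.
Proof.
move=> hi hj hk.
rewrite -(modn_small hk) -(modn_small hi) -[in RHS](modn_small hi).
rewrite -(eqn_modDr j) -addnA subnK ?(ltnW hj) // modnDr.
by rewrite modnDml.
Qed.

Lemma up_shift m x c K0 : (0 < m)%N -> (K0 < m)%N ->
  ((x + c) %% m == K0)%N = (x %% m == (K0 + (m - c %% m)) %% m)%N.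
Proof.
move=> m0 hK.
have E : (K0 + (m - c %% m) + c = K0 %[mod m])%N.
  by rewrite -modnDmr -addnA (subnK (ltnW (ltn_pmod c m0))) modnDr.
by rewrite -[in LHS](modn_small hK) -[in RHS](eqn_modDr c) E.
Qed.

Lemma uniq_sol n c k : coprime c n -> (k < n)%N ->
  exists t : 'I_n, ((c * t) %% n = k)%N /\ forall t' : 'I_n, ((c * t') %% n = k)%N -> t' = t.
Proof.
move=> co hk; have n0 : (0 < n)%N by apply: leq_ltn_trans hk.
pose f (t : 'I_n) : 'I_n := Ordinal (ltn_pmod (c * t) n0).
have uniq : forall t1 t2 : 'I_n, ((c * t1) %% n = (c * t2) %% n)%N -> t1 = t2.
  move=> t1 t2 E; apply/val_inj => /=.
  wlog le : t1 t2 E / (t1 <= t2)%N.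
    by move=> W; case/orP: (leq_total t1 t2) => h; [|apply/esym]; apply: W.
  apply/eqP; rewrite eqn_leq le /=.
  have : (n %| c * (t2 - t1))%N.
    by rewrite mulnBr -eqn_mod_dvd ?leq_mul2l ?le ?orbT // E.
  rewrite Gauss_dvdr; last by rewrite coprime_sym.
  move=> D; rewrite leqNgt; apply/negP => lt12.
  have P : (0 < t2 - t1)%N by rewrite subn_gt0.
  have := dvdn_leq P D; have := ltn_ord t2.
  move=> h2 h3; have : (t2 - t1 < n)%N by apply: leq_ltn_trans (leq_subr _ _) h2.
  by rewrite ltnNge h3.
have finj : injective f by move=> t1 t2 /(congr1 val) /= /uniq.
have [g fg gf] := injF_bij finj.
exists (g (Ordinal hk)); split.
  by have := congr1 val (gf (Ordinal hk)).
by move=> t' E; apply: uniq; rewrite E; have := congr1 val (gf (Ordinal hk)).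
Qed.

Lemma sum_if_uniq (R : nmodType) (I : finType) (P : pred I) (F : I -> R) t0 :
  P t0 -> (forall t, P t -> t = t0) -> \sum_t (if P t then F t else 0) = F t0.
Proof.
move=> Pt0 U; rewrite -big_mkcond (big_pred1 t0) // => t /=.
by apply/idP/eqP => [/U|->].
Qed.

Lemma count_inj (R : realFieldType) N (f : 'I_N -> nat) :
  (forall j, f j < N)%N -> (forall j1 j2, f j1 = f j2 -> j1 = j2) ->
  forall k : 'I_N, \sum_j (if f j == k :> nat then 1 else 0 : R) = 1.
Proof.
move=> fN finj k.
pose g j : 'I_N := Ordinal (fN j).
have ginj : injective g by move=> j1 j2 /(congr1 val) /= /finj.
have [h gh hg] := injF_bij ginj.
rewrite (@sum_if_uniq _ _ _ _ (h k)) //.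
  by apply/eqP; exact: (congr1 val (hg k)).
by move=> t /eqP E; apply: ginj; rewrite hg; apply: val_inj.
Qed.

Lemma inj_of_count (R : realFieldType) N (f : 'I_N -> nat) :
  (forall j, f j < N)%N ->
  (forall k : 'I_N, \sum_j (if f j == k :> nat then 1 else 0 : R) = 1) ->
  forall j1 j2, f j1 = f j2 -> j1 = j2.
Proof.
move=> fN C j1 j2 E; apply/eqP; apply/negPn/negP => ne.
have := C (Ordinal (fN j1)); rewrite (bigD1 j1) //= eqxx (bigD1 j2) //=; last by rewrite eq_sym.
rewrite -E eqxx.
set S := \sum_(i | _) _.
have H : 0 <= S by apply: sumr_ge0 => i _; case: ifP.
move=> H'; have : 1 + S = 0 by apply: (addrI 1); rewrite addr0.
by move/eqP; rewrite paddr_eq0 ?ler01 // oner_eq0.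
Qed.

Lemma perm_diag (R : realFieldType) N (t : {perm 'I_N}) (P : 'I_N -> 'I_N -> bool) :
  \sum_i \sum_(j | P i j) perm_matrix R t i j = \sum_j (if P (t j) j then 1 else 0).
Proof.
under eq_bigr do rewrite big_mkcond.
rewrite exchange_big; apply: eq_bigr => j _ /=.
rewrite (bigD1 (t j)) //= mxE eqxx big1 ?addr0 //.
by move=> i /negbTE ne; rewrite mxE ne; case: P.
Qed.

Lemma ord_pos N (j : 'I_N) : (0 < N)%N.
Proof. by apply: leq_ltn_trans (ltn_ord j). Qed.

Lemma panmagic_inj (R : realFieldType) N (s : {perm 'I_N}) : panmagic_perm R s ->
  (forall j1 j2 : 'I_N, ((s j1 + j1) %% N = (s j2 + j2) %% N)%N -> j1 = j2) /\
  (forall j1 j2 : 'I_N, ((s j1 + (N - j1)) %% N = (s j2 + (N - j2)) %% N)%N -> j1 = j2).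
Proof.
case=> _ [_ [_ [U D]]]; split; apply: (inj_of_count (R:=R)).
- by move=> j; rewrite ltn_pmod // (ord_pos j).
- by move=> k; rewrite -[RHS](U k) perm_diag.
- by move=> j; rewrite ltn_pmod // (ord_pos j).
- by move=> k; rewrite -[RHS](D k) perm_diag.
Qed.

Lemma inj_panmagic (R : realFieldType) N (s : {perm 'I_N}) :
  (forall j1 j2 : 'I_N, ((s j1 + j1) %% N = (s j2 + j2) %% N)%N -> j1 = j2) ->
  (forall j1 j2 : 'I_N, ((s j1 + (N - j1)) %% N = (s j2 + (N - j2)) %% N)%N -> j1 = j2) ->
  panmagic_perm R s.
Proof.
move=> U D; split; [|split; [|split; [|split]]].
- by move=> i j; rewrite mxE; case: ifP.
- move=> i; rewrite (bigD1 ((s^-1)%g i)) //= mxE permKV eqxx big1 ?addr0 //.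
  move=> j ne; rewrite mxE; case: eqP => // E.
  by move: ne; rewrite E permK eqxx.
- move=> j; rewrite (bigD1 (s j)) //= mxE eqxx big1 ?addr0 //.
  by move=> i /negbTE ne; rewrite mxE ne.
- move=> k; rewrite perm_diag; apply: count_inj => // j.
  by rewrite ltn_pmod // (ord_pos j).
- move=> k; rewrite perm_diag; apply: count_inj => // j.
  by rewrite ltn_pmod // (ord_pos j).
Qed.

Definition dbl n (t : 'I_n) : 'I_n := Ordinal (ltn_pmod (2 * t)%N (ord_pos t)).

Definition Bmx (R : realFieldType) m n (A : 'M[R]_m) : 'M[R]_(m * n) :=
  \matrix_(i, j) if (lo i == ((2 * lo j) %% n)%N :> nat) then A (hi i) (hi j) else 0.

Lemma B_entry (R : realFieldType) m n (A : 'M[R]_m) a s b t :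
  Bmx n A (idx a s) (idx b t) = if (s == ((2 * t) %% n)%N :> nat) then A a b else 0.
Proof. by rewrite mxE !hi_idx !lo_idx. Qed.

Lemma B_sum (R : realFieldType) m n (A : 'M[R]_m) (P : 'I_(m*n) -> 'I_(m*n) -> bool) :
  \sum_i \sum_(j | P i j) Bmx n A i j =
  \sum_a \sum_b A a b * \sum_t (if P (idx a (dbl t)) (idx b t) then 1 else 0).
Proof.
under eq_bigr do rewrite big_mkcond.
rewrite sum_split; apply: eq_bigr => a _.
under eq_bigr do rewrite sum_split.
rewrite exchange_big; apply: eq_bigr => b _.
rewrite mulr_sumr exchange_big; apply: eq_bigr => t _.
rewrite (bigD1 (dbl t)) //= B_entry eqxx big1 ?addr0.
  by case: ifP; rewrite ?mulr1 ?mulr0.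
by move=> s ne; rewrite B_entry; case: ifP => //; case: eqP => // E; move: ne; rewrite (_ : s = dbl t) ?eqxx //; apply: val_inj.
Qed.

Lemma up_cond m n a b t k : (0 < m)%N -> (t < n)%N ->
  ((((a * n + (2 * t) %% n) + (b * n + t)) %% (m * n) == k) =
  ((a + b + ((2 * t) %% n + t) %/ n) %% m == k %/ n) && ((3 * t) %% n == k %% n))%N.
Proof.
move=> m0 tn; have n0 : (0 < n)%N by apply: leq_ltn_trans tn.
rewrite addnACA -mulnDl {1}(divn_eq ((2 * t) %% n + t) n) addnA -mulnDl.
rewrite mod_mn ?ltn_pmod // {1}(divn_eq k n) decomp_eq ?ltn_pmod //.
by rewrite modnDml -mulSnr.
Qed.

Lemma down_cond m n a b t k : (0 < m)%N -> (t < n)%N -> (k < m * n)%N ->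
  ((a * n + (2 * t) %% n) == (k + (b * n + t)) %% (m * n))%N =
  (a == (k %/ n + b + (k %% n + t) %/ n) %% m)%N && (t == k %% n)%N.
Proof.
move=> m0 tn kmn; have n0 : (0 < n)%N by apply: leq_ltn_trans tn.
rewrite {1}(divn_eq k n) addnACA -mulnDl {1}(divn_eq (k %% n + t) n) addnA -mulnDl.
rewrite mod_mn ?ltn_pmod // decomp_eq ?ltn_pmod //; congr andb.
rewrite mul2n -addnn -(modn_small (ltn_pmod k n0)) -(modn_small tn).
by rewrite !modnDm eqn_modDr.
Qed.

Lemma B_pan (R : realFieldType) m n (A : 'M[R]_m) : (0 < m)%N -> coprime 2 n -> coprime 3 n ->
  panstochastic A -> panstochastic (Bmx n A).
Proof.
move=> m0 c2 c3 [A0 [Ar [Ac [Au Ad]]]].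
split; [|split; [|split; [|split]]].
- by move=> i j; rewrite mxE; case: ifP => // _; exact: A0.
- move=> i; have [a [s ->]] : exists a s, i = idx a s by exists (hi i), (lo i); rewrite idx_hilo.
  rewrite sum_split -[RHS](Ar a); apply: eq_bigr => b _.
  under eq_bigr do rewrite B_entry.
  have [t0 [Ht0 U]] := uniq_sol c2 (ltn_ord s).
  rewrite (@sum_if_uniq _ _ _ _ t0) //=; first by rewrite Ht0.
  by move=> t /eqP E; apply: U; rewrite -E.
- move=> j; have [b [t ->]] : exists b t, j = idx b t by exists (hi j), (lo j); rewrite idx_hilo.
  rewrite sum_split -[RHS](Ac b); apply: eq_bigr => a _.
  under eq_bigr do rewrite B_entry.
  rewrite (@sum_if_uniq _ _ _ _ (dbl t)) //=.
  by move=> s /eqP E; apply: val_inj.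
- move=> k; rewrite B_sum.
  have [t0 [Ht0 U]] := uniq_sol c3 (ltn_pmod k (ord_pos (lo k))).
  pose c0 := (((2 * t0) %% n + t0) %/ n)%N.
  pose k' : 'I_m := Ordinal (ltn_pmod (k %/ n + (m - c0 %% m))%N m0).
  rewrite -[RHS](Au k'); apply: eq_bigr => a _; rewrite [RHS]big_mkcond; apply: eq_bigr => b _ /=.
  rewrite (bigD1 t0) //= big1 ?addr0.
    by rewrite up_cond // Ht0 eqxx andbT up_shift ?(hi_lt k) //; case: ifP; rewrite ?mulr1 ?mulr0.
  move=> t ne; rewrite up_cond //.
  have [E|E] := eqVneq ((3 * t) %% n)%N (k %% n)%N; last by rewrite andbF.
  by move: ne; rewrite (U t E) eqxx.
- move=> k; rewrite B_sum.
  pose k' : 'I_m := Ordinal (ltn_pmod (k %/ n + (k %% n + k %% n) %/ n)%N m0).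
  rewrite -[RHS](Ad k'); apply: eq_bigr => a _; rewrite [RHS]big_mkcond; apply: eq_bigr => b _ /=.
  rewrite down_eq ?ltn_pmod // (bigD1 (lo k)) //= big1 ?addr0.
    rewrite down_eq ?(idx_lt a (dbl (lo k))) ?(idx_lt b (lo k)) // down_cond ?ltn_ord ?ltn_pmod ?(ord_pos (lo k)) // eqxx andbT.
    by rewrite modnDml addnAC; case: ifP; rewrite ?mulr1 ?mulr0.
  move=> t ne; rewrite down_eq ?(idx_lt a (dbl t)) ?(idx_lt b t) // down_cond ?ltn_ord //.
  have [E|E] := eqVneq (t : nat) (k %% n)%N; last by rewrite andbF.
  by move: ne; rewrite (_ : t = lo k) ?eqxx //; apply: val_inj.
Qed.

Section Decomp.
Variables (R : realFieldType) (m n : nat) (A : 'M[R]_m).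
Hypothesis m0 : (0 < m)%N.
Hypothesis n0 : (0 < n)%N.
Hypothesis c2 : coprime 2 n.

Let z : 'I_n := Ordinal n0.

Definition mt (s : {perm 'I_(m*n)}) (t : {perm 'I_m}) :=
  [forall b, s (idx b z) == idx (t b) z].

Lemma idx_inj (a b : 'I_m) : (idx a z == idx b z) = (a == b).
Proof.
apply/eqP/eqP => [E|->] //; by rewrite -(hi_idx a z) E hi_idx.
Qed.

Lemma col_support (c : {perm 'I_(m*n)} -> R) s :
  (forall p, 0 <= c p) ->
  Bmx n A = \sum_p c p *: perm_matrix R p -> c s != 0 ->
  forall b, lo (s (idx b z)) = z.
Proof.
move=> cge BE cs b; set j := idx b z.
have pos : 0 < Bmx n A (s j) j.
  rewrite BE summxE (bigD1 s) //= !mxE eqxx mulr1.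
  apply: (@lt_le_trans _ _ (c s)); first by rewrite lt_def cs cge.
  rewrite lerDl; apply: sumr_ge0 => p _; rewrite !mxE.
  by apply: mulr_ge0 => //; case: ifP.
move: pos; rewrite mxE; case: ifP => [/eqP E _|]; last by rewrite ltxx.
by apply: val_inj; rewrite -[LHS]/(nat_of_ord (lo (s j))) E /j lo_idx /= muln0 mod0n.
Qed.

Lemma exists_tau (c : {perm 'I_(m*n)} -> R) s :
  (forall p, 0 <= c p) ->
  Bmx n A = \sum_p c p *: perm_matrix R p -> c s != 0 ->
  exists t, mt s t.
Proof.
move=> cge BE cs.
have L := col_support cge BE cs.
pose g b := hi (s (idx b z)).
have E b : s (idx b z) = idx (g b) z by rewrite -{1}(idx_hilo (s (idx b z))) L.
have ginj : injective g.
  move=> b1 b2 Eg; apply/eqP; rewrite -idx_inj; apply/eqP.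
  by apply: (@perm_inj _ s); rewrite !E Eg.
exists (perm ginj); apply/forallP => b; by rewrite permE E.
Qed.

Lemma mt_uniq s t1 t2 : mt s t1 -> mt s t2 -> t1 = t2.
Proof.
move=> /forallP H1 /forallP H2; apply/permP => b.
have := H1 b; rewrite (eqP (H2 b)) idx_inj => /eqP; done.
Qed.

Lemma mt_panmagic s t : mt s t -> panmagic_perm R s -> panmagic_perm R t.
Proof.
move=> /forallP H /(panmagic_inj) [U D].
have E b : val (s (idx b z)) = (t b * n)%N by rewrite (eqP (H b)) /= addn0.
apply: inj_panmagic.
- move=> b1 b2 Eb; apply/eqP; rewrite -idx_inj; apply/eqP; apply: U.
  by rewrite !E /= !addn0 -!mulnDl -!muln_modl Eb.
- move=> b1 b2 Eb; apply/eqP; rewrite -idx_inj; apply/eqP; apply: D.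
  by rewrite !E /= !addn0 -!mulnBl -!mulnDl -!muln_modl Eb.
Qed.

Lemma B_decomp : convex_comb_panmagic (Bmx n A) -> convex_comb_panmagic A.
Proof.
case=> c [cge [cP [c1 BE]]].
pose d t := \sum_s c s * (if mt s t then 1 else 0).
have key s : c s != 0 -> exists t0, forall t, mt s t = (t == t0).
  move=> cs; have [t0 H0] := exists_tau cge BE cs; exists t0 => t.
  apply/idP/eqP => [H|->] //; exact: mt_uniq H H0.
exists d; split; [|split; [|split]].
- move=> t; apply: sumr_ge0 => s _; apply: mulr_ge0 => //; by case: ifP.
- move=> t dn0.
  case: (pickP (fun s => c s * (if mt s t then 1 else 0) != 0)) => [s Hs | none]; last first.
    by move: dn0; rewrite /d big1 ?eqxx // => s _; apply/eqP; apply/negbFE; exact: none.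
  have cs : c s != 0 by move: Hs; apply: contraNneq => ->; rewrite mul0r.
  have ms : mt s t by move: Hs; case: (mt s t); rewrite // mulr0 eqxx.
  exact: mt_panmagic ms (cP s cs).
- rewrite /d exchange_big -[RHS]c1; apply: eq_bigr => s _.
  rewrite -mulr_sumr; have [->|cs] := eqVneq (c s) 0; first by rewrite mul0r.
  have [t0 H0] := key s cs.
  rewrite (@sum_if_uniq _ _ _ _ t0) ?mulr1 ?H0 ?eqxx //.
  by move=> t; rewrite H0 => /eqP.
- apply/matrixP => a b; rewrite summxE.
  have -> : A a b = Bmx n A (idx a z) (idx b z).
    by rewrite B_entry /= muln0 mod0n eqxx.
  rewrite BE summxE.
  under [RHS]eq_bigr do rewrite !mxE /d mulr_suml.
  rewrite exchange_big; apply: eq_bigr => s _; rewrite !mxE.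
  have [->|cs] := eqVneq (c s) 0.
    by rewrite mul0r big1 // => t _; rewrite mul0r mul0r.
  have [t0 H0] := key s cs.
  rewrite (bigD1 t0) //= H0 eqxx mulr1 big1 ?addr0.
    move: (H0 t0); rewrite eqxx => /forallP /(_ b) /eqP ->; by rewrite idx_inj.
  by move=> t /negbTE ne; rewrite H0 ne mulr0 mul0r.
Qed.

End Decomp.

Theorem lemma4p2 (R : realFieldType) (m n : nat) :
  (0 < m)%N -> (0 < n)%N -> gcdn n 6 = 1%N ->
  (exists A : 'M[R]_m, panstochastic A /\ ~ convex_comb_panmagic A) ->
  exists B : 'M[R]_(m * n), panstochastic B /\ ~ convex_comb_panmagic B.
Proof.
move=> m0 n0 g [A [Ap nA]].
have c6 : coprime 6 n by rewrite /coprime gcdnC g.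
have c2 : coprime 2 n by apply: coprime_dvdl c6.
have c3 : coprime 3 n by apply: coprime_dvdl c6.
exists (Bmx n A); split; first exact: B_pan.
by move=> cB; apply: nA; exact: (B_decomp n0 cB).
Qed.
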